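(* Assume the setting below. Then for all $s\in\mathbb{R}$ and $\Delta t\ge0$, $$R^*_{M_i}(s+\Delta t)-R^*_{M_i}(s)\le \Big[\Delta t-\frac{\beta_{ST}(\Delta t)}{C}\Big]_\uparrow^+\cdot idSl_{M_i}+c_{M_i}^{max}-c_{M_i}^{min},$$ i.e. $\sigma_{M_i}(t)=[t-\beta_{ST}(t)/C]_\uparrow^+\,idSl_{M_i}+c_{M_i}^{max}-c_{M_i}^{min}$ is a shaping curve for the output of class $M_i$ at the port (non-preemption mode).
   Context: Fix an output port with physical link rate $C>0$. Its gate control list (GCL) is periodic with period $p>0$ and contains $N\ge 1$ scheduled-traffic (ST) windows per period. Window $k\in\{0,\dots,N-1\}$ is the interval $[o_k,o_k+L_k)$, where $0\le o_0<o_1<\dots<o_{N-1}<p$, $L_k\ge 0$, $o_k+L_k\le o_{k+1}$ for $k<N-1$ and $o_{N-1}+L_{N-1}\le o_0+p$. Indices are extended to all integers periodically: $o_{k+N}=o_k+p$, $L_{k+N}=L_k$. Relative offsets are $o_{j,i}=o_j-o_i$. Let $S=\bigcup_{k\in\mathbb Z}[o_k,o_k+L_k)$ and for $s\le t$ let $\Delta t_{ST}(s,t)$ be the Lebesgue measure of $S\cap[s,t]$. Let $g_i=o_i-(o_{i-1}+L_{i-1})$ be the idle gap before window $i$. Define $\beta_{TDMA}(x,L)=C\max\{\lfloor x/p\rfloor L,\ x-\lceil x/p\rceil(p-L)\}$ and $\beta_{ST}(t)=\min_{0\le i\le N-1}\sum_{j=i}^{i+N-1}\beta_{TDMA}\big(t+p-L_j-g_i-o_{j,i},\,L_j\big)$.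 For a function $f$, $[f]_\uparrow^+(t)=\max\{0,\sup_{0\le u\le t}f(u)\}$. AVB class $M_i$ has idle slope $idSl_{M_i}\in(0,C)$ and send slope $sdSl_{M_i}=idSl_{M_i}-C$; $R^*_{M_i}(t)$ is the cumulative number of bits of class $M_i$ transmitted by time $t$ and $c_{M_i}(t)$ its credit. Assumptions: for every interval $[s,s+\Delta t]$, the interval is partitioned into measurable sets $T^+$ (where $c_{M_i}$ increases at rate $idSl_{M_i}$), $T^-$ (exactly the times when a class-$M_i$ frame is being transmitted, where $R^*_{M_i}$ increases at rate $C$ and $c_{M_i}$ changes at rate $sdSl_{M_i}$), and $T^0$ (where $c_{M_i}$ does not increase: it is frozen or reset downward); $R^*_{M_i}$ is constant outside $T^-$; $S\cap[s,s+\Delta t]\subseteq T^0$ (AVB gates closed in ST windows). Constants $c_{M_i}^{min}\le c_{M_i}^{max}$ satisfy $c_{M_i}^{min}\le c_{M_i}(t)\le c_{M_i}^{max}$ for all $t$. *)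

(* Defs.v *)
From mathcomp Require Import all_boot all_order all_algebra.
From mathcomp Require Import all_classical all_reals all_analysis.
Set Implicit Arguments. Unset Strict Implicit. Unset Printing Implicit Defensive.
Import Order.TTheory GRing.Theory Num.Theory.
Local Open Scope classical_set_scope.
Local Open Scope ring_scope.

Section TSN.
Variable R : realType.

Definition beta_TDMA (C p : R) (x Lk : R) : R :=
  C * Num.max ((Num.floor (x / p))%:~R * Lk)
              (x - (Num.ceil (x / p))%:~R * (p - Lk)).

Definition gap (o L : int -> R) (i : int) : R := o i - (o (i - 1) + L (i - 1)).

(* The min over the nonempty range 0..N-1 (N >= 1) is taken with the
   i = 0 term as neutral element, which does not change its value. *)
Definition beta_ST_term (C p : R) (N : nat) (o L : int -> R) (t : R) (i : nat) : R :=
  \sum_(i <= j < i + N)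
     beta_TDMA C p (t + p - L j%:Z - gap o L i%:Z - (o j%:Z - o i%:Z)) (L j%:Z).

Definition beta_ST (C p : R) (N : nat) (o L : int -> R) (t : R) : R :=
  \big[Num.min/beta_ST_term C p N o L t 0]_(i < N) beta_ST_term C p N o L t i.

Definition up_plus (f : R -> R) (t : R) : R :=
  Num.max 0 (sup [set f u | u in `[0, t]]).

Definition ST_set (o L : int -> R) : set R :=
  \bigcup_(k in [set: int]) `[o k, o k + L k[%classic.

Definition meas (A : set R) (a b : R) : R :=
  fine (@lebesgue_measure R (A `&` `[a, b]%classic)).

End TSN.

(* Main.v *)
Require Import Defs.
From mathcomp Require Import all_boot all_order all_algebra.
From mathcomp Require Import all_classical all_reals all_analysis.
From mathcomp Require Import lra zify.
Import Order.TTheory GRing.Theory Num.Theory.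
Local Open Scope classical_set_scope.
Local Open Scope ring_scope.

Section M.
Context {R : realType}.
Local Notation lam := (@lebesgue_measure R).

Lemma lam_itv_cc (a b : R) : a <= b -> lam `[a, b] = (b - a)%:E.
Proof.
move=> ab; rewrite lebesgue_measure_itv /= lte_fin.
case: (ltP a b) => h; first by rewrite -EFinD.
have e : a = b by apply/le_anti; rewrite ab h.
by rewrite e subrr.
Qed.

Lemma lam_itv_co (a b : R) : a <= b -> lam `[a, b[ = (b - a)%:E.
Proof.
move=> ab; rewrite lebesgue_measure_itv /= lte_fin.
case: (ltP a b) => h; first by rewrite -EFinD.
have e : a = b by apply/le_anti; rewrite ab h.
by rewrite e subrr.
Qed.

Lemma lam_fin (X : set R) a b : measurable X -> X `<=` `[a, b] ->
  lam X = (fine (lam X))%:E.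
Proof.
move=> mX sX; have ab : (lam X <= lam `[a,b])%E by apply: le_measure => //; rewrite inE.
rewrite fineK // ge0_fin_numE //.
apply: (le_lt_trans ab); rewrite lebesgue_measure_itv; case: ifP => _ //.
by rewrite /= ltry.
Qed.

Definition mu (X : set R) : R := fine (lam X).

Lemma mu_ge0 (X : set R) : 0 <= mu X.
Proof. by apply: fine_ge0; apply: measure_ge0. Qed.

Lemma muU (X Y : set R) (a b : R) : measurable X -> measurable Y -> X `&` Y = set0 ->
  X `<=` `[a, b] -> Y `<=` `[a, b] -> mu (X `|` Y) = mu X + mu Y.
Proof.
move=> mX mY XY sX sY; rewrite /mu.
have -> : lam (X `|` Y) = (lam X + lam Y)%E by apply: measureU.
by rewrite (lam_fin _ _ _ mX sX) (lam_fin _ _ _ mY sY) -EFinD.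
Qed.

Lemma mu_le (X Y : set R) (a b : R) : measurable X -> measurable Y -> X `<=` Y ->
  Y `<=` `[a, b] -> mu X <= mu Y.
Proof.
move=> mX mY XY sY.
have sX : X `<=` `[a,b] by apply: subset_trans sY.
rewrite -lee_fin /mu -(lam_fin _ _ _ mX sX) -(lam_fin _ _ _ mY sY).
by apply: le_measure => //; rewrite inE.
Qed.

Lemma mu_co a b : a <= b -> mu `[a, b[ = b - a.
Proof. by move=> ab; rewrite /mu lam_itv_co. Qed.

Lemma mu_cc a b : a <= b -> mu `[a, b] = b - a.
Proof. by move=> ab; rewrite /mu lam_itv_cc. Qed.

Lemma mu_len (X : set R) (a b : R) : measurable X -> X `<=` `[a, b] -> a <= b -> mu X <= b - a.
Proof.
move=> mX sX ab; rewrite -(mu_cc a b ab).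
by apply: (mu_le _ _ a b).
Qed.

Lemma measE (A : set R) a b : meas A a b = mu (A `&` `[a, b]).
Proof. by []. Qed.

Lemma meas_len (A : set R) a b : measurable A -> a <= b -> meas A a b <= b - a.
Proof.
move=> mA ab; rewrite measE; apply: mu_len => //.
by apply: measurableI.
Qed.

Lemma meas_ge0 (A : set R) a b : 0 <= meas A a b.
Proof. exact: mu_ge0. Qed.

Lemma meas_mono (A : set R) a b c d : measurable A -> c <= d ->
  A `&` `[a, b] `<=` A `&` `[c, d] -> meas A a b <= meas A c d.
Proof.
move=> mA cd sub; rewrite !measE; apply: (mu_le _ _ c d) => //.
all: try by apply: measurableI.
Qed.

Lemma meas_split_le (A : set R) a b c : measurable A -> a <= b -> b <= c ->
  meas A a c <= meas A a b + (c - b).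
Proof.
move=> mA ab bc; rewrite !measE.
have -> : A `&` `[a, c] = (A `&` `[a, b]) `|` (A `&` `]b, c]).
  apply/seteqP; split => z /=.
    rewrite !in_itv /= => -[Az /andP[az zc]]; case: (leP z b) => zb.
      by left; split => //; rewrite az.
    by right; split => //; rewrite zc.
  rewrite !in_itv /=; case => -[Az /andP[h1 h2]]; split => //.
    by rewrite h1 (le_trans h2 bc).
  by rewrite h2 (le_trans ab (ltW h1)).
rewrite (muU _ _ a c).
- rewrite lerD2l; apply: mu_len => //; first by apply: measurableI.
  by move=> z /= [_]; rewrite !in_itv /= => /andP[h1 h2]; rewrite (ltW h1) h2.
- by apply: measurableI.
- by apply: measurableI.
- apply/seteqP; split => z //= [[_]]; rewrite !in_itv /= => /andP[_ h1] [_].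
  by move=> /andP[h2 _]; move: (lt_le_trans h2 h1); rewrite ltxx.
- by move=> z /= [_]; rewrite !in_itv /= => /andP[h1 h2]; rewrite h1 (le_trans h2 bc).
- by move=> z /= [_]; rewrite !in_itv /= => /andP[h1 h2]; rewrite h2 (le_trans ab (ltW h1)).
Qed.

Lemma meas_split_ge (A : set R) s a u : measurable A -> s <= a -> a <= u ->
  `[s, a[ `<=` A -> (a - s) + meas A a u <= meas A s u.
Proof.
move=> mA sa au sub; rewrite !measE -(mu_co s a sa).
rewrite -(muU _ _ s u).
- apply: (mu_le _ _ s u).
  + by apply: measurableU => //; apply: measurableI.
  + by apply: measurableI.
  + move=> z /= [zi|[Az]].
      split; first exact: sub.
      by move: zi; rewrite !in_itv /= => /andP[h1 h2]; rewrite h1 (le_trans (ltW h2) au).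
    by rewrite !in_itv /= => /andP[h1 h2]; split => //; rewrite h2 (le_trans sa h1).
  + by move=> z [].
- by [].
- by apply: measurableI.
- apply/seteqP; split => z //=; rewrite !in_itv /= => -[/andP[_ h1] [_ /andP[h2 _]]].
  by move: (lt_le_trans h1 h2); rewrite ltxx.
- by move=> z /=; rewrite !in_itv /= => /andP[h1 h2]; rewrite h1 (le_trans (ltW h2) au).
- by move=> z /= [_]; rewrite !in_itv /= => /andP[h1 h2]; rewrite h2 (le_trans sa h1).
Qed.

Lemma meas_family (A : set R) (W : nat -> set R) a b n : measurable A ->
  (forall r, measurable (W r)) -> (forall r, W r `<=` A) ->
  (forall r r', (r < r')%N -> W r `&` W r' = set0) ->
  \sum_(r < n) mu (W r `&` `[a, b]) <= meas A a b.
Proof.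
move=> mA mW WA dW.
pose U n := [set z | exists2 r, (r < n)%N & (W r `&` `[a, b]) z].
have U0 : U 0%N = set0 by apply/seteqP; split => z // [].
have US m : U m.+1 = U m `|` (W m `&` `[a, b]).
  apply/seteqP; split => z /=.
    case=> r; rewrite ltnS leq_eqVlt => /orP[/eqP->|rm] h; first by right.
    by left; exists r.
  case=> [[r rm h]|h]; first by exists r => //; apply: ltnW.
  by exists m.
have mU m : measurable (U m).
  elim: m => [|m IH]; first by rewrite U0.
  by rewrite US; apply: measurableU => //; apply: measurableI.
have sU m : U m `<=` `[a, b] by move=> z [r _ []].
have eU m : mu (U m) = \sum_(r < m) mu (W r `&` `[a, b]).
  elim: m => [|m IH]; first by rewrite U0 big_ord0 /mu measure0.
  rewrite US big_ord_recr /= -IH (muU _ _ a b) //.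
  all: try by apply: measurableI.
  all: try by move=> z [].
  apply/seteqP; split => z //= [[r rm [h1 _]] [h2 _]].
  by move: (dW r m rm) => /seteqP[+ _] => /(_ z); apply; split.
rewrite -eU measE; apply: (mu_le _ _ a b) => //.
all: try by apply: measurableI.
all: try by move=> z [].
by move=> z [r _ [h1 h2]]; split => //; apply: WA h1.
Qed.

Lemma mu_win (x y a b : R) :
  Num.max 0 (Num.min y b - Num.max x a) <= mu (`[x, y[ `&` `[a, b]).
Proof.
case: (leP (Num.max x a) (Num.min y b)) => h.
  have -> : Num.max 0 (Num.min y b - Num.max x a) = Num.min y b - Num.max x a.
    by apply/max_idPr; rewrite subr_ge0.
  rewrite -mu_co //; apply: (mu_le _ _ a b) => //.
  all: try by apply: measurableI.
  all: try by move=> z [].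
  move=> z /=; rewrite !in_itv /= ge_max lt_min => /andP[/andP[h1 h2] /andP[h3 h4]].
  by rewrite h1 h3 h2 (ltW h4).
have -> : Num.max 0 (Num.min y b - Num.max x a) = 0.
  by apply/max_idPl; rewrite subr_le0 ltW.
exact: mu_ge0.
Qed.
End M.

Lemma class_bound {R : realType} (p Lj d t S A : R) (M : nat) :
  0 < p -> 0 <= Lj -> 0 <= d -> d <= p - Lj -> 0 <= t -> A = S - (p - Lj) + d ->
  Num.floor ((t + d) / p) <= M%:Z ->
  Num.max ((Num.floor ((t + d) / p))%:~R * Lj)
          ((t + d) - (Num.ceil ((t + d) / p))%:~R * (p - Lj))
  <= \sum_(m < M.+1) Num.max 0 (Num.min (S + m%:R * p + Lj) (A + t)
                                 - Num.max (S + m%:R * p) A).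
Proof.
move=> p0 L0 d0 dp t0 eA fM.
set x := t + d.
have x0 : 0 <= x by rewrite /x addr_ge0.
have f0 : 0 <= Num.floor (x / p) by rewrite floor_ge0 divr_ge0 // ltW.
set n := `|Num.floor (x / p)|%N.
have fn : Num.floor (x / p) = n%:Z by rewrite /n gez0_abs.
have nM : (n <= M)%N by rewrite -lez_nat -fn.
have hf1 : n%:R * p <= x.
  have := floor_le_tmp (x / p); rewrite fn ler_pdivlMr //.
have hf2 : x < (n%:R + 1) * p.
  have := floorD1_gt (x / p); rewrite fn ltr_pdivrMr //.
  by rewrite intrD.
have hc : x <= (Num.ceil (x / p))%:~R * p.
  by have := ceil_ge (x / p); rewrite ler_pdivrMr.
set c := Num.ceil (x / p) in hc *.
rewrite fn /=.
pose F := fun m : nat => Num.max 0 (Num.min (S + m%:R * p + Lj) (A + t) - Num.max (S + m%:R * p) A).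
rewrite (_ : \sum_(m < M.+1) _ = \sum_(m < M.+1) F m) //.
rewrite -(big_mkord xpredT F) (big_cat_nat (n := n)) //=; last by apply: leqW.
rewrite [\sum_(n <= i < M.+1) _]big_ltn ?ltnS //.
have rest : 0 <= \sum_(n.+1 <= i < M.+1) F i by apply: sumr_ge0 => i _; rewrite /F le_max lexx.
have first : \sum_(0 <= i < n) F i = n%:R * Lj.
  rewrite (eq_big_nat _ _ (F2 := fun _ => Lj)); last first.
    move=> m /andP[_ mn]; rewrite /F.
    have mnr : m%:R + 1 <= n%:R :> R by rewrite natr1 ler_nat.
    have -> : Num.min (S + m%:R * p + Lj) (A + t) = S + m%:R * p + Lj.
      apply/min_idPl; rewrite eA.
      have : (m%:R + 1) * p <= n%:R * p by rewrite ler_pM2r.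
      rewrite /x in hf1; lra.
    have -> : Num.max (S + m%:R * p) A = S + m%:R * p.
      apply/max_idPl; rewrite eA.
      have : 0 <= m%:R * p by rewrite mulr_ge0 // ltW.
      lra.
    have -> : S + m%:R * p + Lj - (S + m%:R * p) = Lj by lra.
    by apply/max_idPr.
  by rewrite sumr_const_nat subn0 mulr_natl.
have Fn : Num.max 0 (x - n%:R * p - (p - Lj)) <= F n.
  rewrite /F.
  have -> : Num.min (S + n%:R * p + Lj) (A + t) = A + t.
    apply/min_idPr; rewrite eA; rewrite /x in hf2; lra.
  have -> : Num.max (S + n%:R * p) A = S + n%:R * p.
    apply/max_idPl; rewrite eA.
    have : 0 <= n%:R * p by rewrite mulr_ge0 // ltW.
    lra.
  have -> : A + t - (S + n%:R * p) = x - n%:R * p - (p - Lj) by rewrite eA /x; lra.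
  by [].
rewrite first -addrA; apply: (le_trans _ (lerD (lexx _) (lerD Fn rest))).
rewrite addr0.
set m0 := Num.max 0 _.
have m00 : 0 <= m0 by rewrite /m0 le_max lexx.
have m01 : x - n%:R * p - (p - Lj) <= m0 by rewrite /m0 le_max lexx orbT.
have nr : n%:~R = n%:R :> R by [].
rewrite nr ge_max; apply/andP; split; first by lra.
have pL : 0 <= p - Lj by lra.
rewrite /x in hc hf1 hf2 m01 *.
case: (lerP c n%:Z) => hcn.
  have hcr : c%:~R <= n%:R :> R by rewrite -nr ler_int.
  have := mulr_ge0 (eqbRL (subr_ge0 _ _) hcr) L0.
  nra.
have hcr : n%:R + 1 <= c%:~R :> R.
  have h1 : n%:Z + 1 <= c by rewrite lezD1.
  by rewrite -nr -[1]/(1%:~R) -intrD ler_int.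
have := mulr_ge0 (eqbRL (subr_ge0 _ _) hcr) pL.
nra.
Qed.

Lemma regroup {R : realType} (g : nat -> R) (M N : nat) :
  \sum_(0 <= r < (M * N)%N) g r = \sum_(0 <= m < M) \sum_(0 <= j < N) g (m * N + j)%N.
Proof.
elim: M => [|M IH]; first by rewrite mul0n !big_geq.
rewrite big_nat_recr //= -IH mulSnr (big_cat_nat (n := (M * N)%N)) //=; last by apply: leq_addr.
congr (_ + _).
rewrite -{1}(add0n (M * N)%N) big_addn addKn.
by apply: eq_bigr => j _; rewrite addnC.
Qed.

Lemma shift_sum {R : realType} (F : nat -> R) (i N : nat) :
  \sum_(i <= j < (i + N)%N) F j = \sum_(0 <= j < N) F (j + i)%N.
Proof. by rewrite -{1}[i]add0n big_addn addKn. Qed.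

Section S.
Context {R : realType} (p : R) (N : nat) (o L : int -> R)
  (Hp : 0 < p) (HN : (1 <= N)%N) (Ho0 : 0 <= o 0)
  (HL : forall k : int, 0 <= L k)
  (Hdisj : forall k : nat, (k.+1 < N)%N -> o k%:Z + L k%:Z <= o k.+1%:Z)
  (Hwrap : o (N.-1)%:Z + L (N.-1)%:Z <= o 0 + p)
  (Hoper : forall k : int, o (k + N%:Z) = o k + p)
  (HLper : forall k : int, L (k + N%:Z) = L k).

Lemma shift_nat (n : nat) (m : int) : o (m + n%:Z * N%:Z) = o m + n%:R * p.
Proof.
elim: n => [|n IH]; first by rewrite mul0r addr0 mul0r addr0.
rewrite -addn1 PoszD mulrDl mul1r addrA Hoper IH natrD mulrDl mul1r addrA //.
Qed.

Lemma shiftL_nat (n : nat) (m : int) : L (m + n%:Z * N%:Z) = L m.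
Proof.
elim: n => [|n IH]; first by rewrite mul0r addr0.
by rewrite -addn1 PoszD mulrDl mul1r addrA HLper IH.
Qed.

Lemma shift (q m : int) : o (m + q * N%:Z) = o m + q%:~R * p.
Proof.
case: q => n; first by rewrite shift_nat.
rewrite NegzE.
have e : m = (m + - (n.+1)%:Z * N%:Z) + (n.+1)%:Z * N%:Z by rewrite -addrA mulNr addNr addr0.
rewrite [in RHS]e shift_nat mulrNz.
have -> : ((n.+1)%:Z)%:~R = (n.+1)%:R :> R by [].
lra.
Qed.

Lemma shiftL (q m : int) : L (m + q * N%:Z) = L m.
Proof.
case: q => n; first by rewrite shiftL_nat.
rewrite NegzE.
have e : m = (m + - (n.+1)%:Z * N%:Z) + (n.+1)%:Z * N%:Z by rewrite -addrA mulNr addNr addr0.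
by rewrite [in RHS]e shiftL_nat.
Qed.

Lemma step (m : int) : o m + L m <= o (m + 1).
Proof.
have N0 : N%:Z != 0 by rewrite eqz_nat -lt0n.
have e := divz_eq m N%:Z.
have r0 : 0 <= (m %% N%:Z)%Z by apply: modz_ge0.
have rN : (m %% N%:Z < N%:Z)%Z by apply: ltz_pmod; rewrite ltz_nat.
set r := (m %% N%:Z)%Z in e r0 rN.
set q := (m %/ N%:Z)%Z in e.
set rn := `|r|%N.
have er : r = rn%:Z by rewrite /rn gez0_abs.
have e1 : m = rn%:Z + q * N%:Z by rewrite e er addrC.
have e2 : m + 1 = (rn%:Z + 1) + q * N%:Z by rewrite e1; lia.
rewrite e2 e1 !shift shiftL.
rewrite addrAC lerD2r.
have rnN : (rn < N)%N by rewrite -ltz_nat -er.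
case: (ltnP rn.+1 N) => h.
  by have := Hdisj _ h; rewrite -addn1 PoszD.
have ern : rn = N.-1 by lia.
have -> : rn%:Z + 1 = 0 + N%:Z by rewrite ern; lia.
by rewrite Hoper ern.
Qed.

Lemma sep_nat (m : int) (k : nat) : o m + L m <= o (m + k.+1%:Z).
Proof.
elim: k => [|k IH]; first exact: step.
have h := step (m + k.+1%:Z).
have e : m + k.+1%:Z + 1 = m + k.+2%:Z by lia.
rewrite e in h; have := HL (m + k.+1%:Z); lra.
Qed.

Lemma mono (m m' : int) : m <= m' -> o m <= o m'.
Proof.
move=> h; case: (lerP m' m) => h2; first by have -> : m = m' by apply/le_anti; rewrite h h2.
have e : m' = m + (`|(m' - m - 1)%R|%N).+1%:Z.
  rewrite -addn1 PoszD gez0_abs; [lia | lia].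
rewrite e; apply: (le_trans _ (sep_nat _ _)).
by rewrite -[X in X <= _]addr0 lerD2l HL.
Qed.

Lemma sep (m m' : int) : m < m' -> o m + L m <= o m'.
Proof.
move=> h.
have e : m' = m + (`|(m' - m - 1)%R|%N).+1%:Z.
  rewrite -addn1 PoszD gez0_abs; [lia | lia].
by rewrite e; apply: sep_nat.
Qed.

Lemma search (s : R) (b : int) (n : nat) : o b <= s -> s < o (b + n%:Z) ->
  exists k : int, o (k - 1) <= s /\ s < o k.
Proof.
move=> hb; elim: n => [|n IH]; first by rewrite addr0 => h; move: (le_lt_trans hb h); rewrite ltxx.
move=> h; case: (lerP (o (b + n%:Z)) s) => h2; last exact: IH.
exists (b + n.+1%:Z); split; last by [].
by have -> : b + n.+1%:Z - 1 = b + n%:Z by rewrite -addn1 PoszD; lia.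
Qed.

Lemma exists_k (s : R) : exists k : int, o (k - 1) <= s /\ s < o k.
Proof.
set q := Num.floor ((s - o 0) / p).
apply: (search s (q * N%:Z) N).
  rewrite -[q * _]add0r shift /q.
  have := floor_le_tmp ((s - o 0) / p); rewrite ler_pdivlMr //; lra.
have -> : q * N%:Z + N%:Z = 0 + (q + 1) * N%:Z by lia.
rewrite shift /q.
have := floorD1_gt ((s - o 0) / p); rewrite ltr_pdivrMr //; lra.
Qed.


Lemma sepL (j m : int) : j <= m -> o j + L j <= o m + L m.
Proof.
move=> h; case: (lerP m j) => h2.
  by have -> : j = m by apply/le_anti; rewrite h h2.
have := sep _ _ h2; have := HL m; lra.
Qed.

Lemma ST_meas : measurable (ST_set o L).
Proof.
have -> : ST_set o L = \bigcup_(n in [set: nat])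
    (`[o n%:Z, o n%:Z + L n%:Z[ `|` `[o (Negz n), o (Negz n) + L (Negz n)[).
  apply/seteqP; split => z /=.
    by case=> -[] n _ h; exists n => //; [left|right].
  by case=> n _ [h|h]; [exists (Posz n) | exists (Negz n)].
by apply: bigcup_measurable => n _; apply: measurableU.
Qed.

Lemma win_ST (k : int) : `[o k, o k + L k[ `<=` ST_set o L.
Proof. by move=> z h; exists k. Qed.

Lemma dbounds (i j : nat) : (i <= j < i + N)%N ->
  0 <= p - L j%:Z - gap o L i%:Z - (o j%:Z - o i%:Z) <= p - L j%:Z.
Proof.
move=> /andP[h1 h2]; rewrite /gap; apply/andP; split.
  have := sepL j%:Z (i%:Z - 1 + N%:Z) ltac:(lia).
  rewrite Hoper HLper; lra.
have := sep (i%:Z - 1) j%:Z ltac:(lia).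
lra.
Qed.

Lemma core (i : nat) (q : int) (t : R) : (i < N)%N -> 0 <= t ->
  \sum_(i <= j < i + N)
    Num.max ((Num.floor ((t + p - L j%:Z - gap o L i%:Z - (o j%:Z - o i%:Z)) / p))%:~R * L j%:Z)
      ((t + p - L j%:Z - gap o L i%:Z - (o j%:Z - o i%:Z))
       - (Num.ceil ((t + p - L j%:Z - gap o L i%:Z - (o j%:Z - o i%:Z)) / p))%:~R * (p - L j%:Z))
  <= meas (ST_set o L) (o i%:Z - gap o L i%:Z + q%:~R * p)
                      (o i%:Z - gap o L i%:Z + q%:~R * p + t).
Proof.
move=> iN t0.
set g := gap o L i%:Z.
set A := o i%:Z - g + q%:~R * p.
pose d (j : nat) := p - L j%:Z - g - (o j%:Z - o i%:Z).
have hd : forall j, (i <= j < i + N)%N -> 0 <= d j <= p - L j%:Z by move=> j; apply: dbounds.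
set Mx := `|Num.floor ((t + p) / p)|%N.
have hMx : Num.floor ((t + p) / p) = Mx%:Z.
  have tp : 0 <= (t + p) / p by apply: divr_ge0; [apply: addr_ge0 => //; exact: ltW | exact: ltW].
  by rewrite /Mx gez0_abs // floor_ge0.
pose k := q * N%:Z + i%:Z.
pose W (r : nat) : set R := `[o (k + r%:Z), o (k + r%:Z) + L (k + r%:Z)[%classic.
pose mw (r : nat) := Num.max 0 (Num.min (o (k + r%:Z) + L (k + r%:Z)) (A + t)
                                - Num.max (o (k + r%:Z)) A).
have hfam : \sum_(r < (Mx.+1 * N)%N) mu (W r `&` `[A, A + t])
            <= meas (ST_set o L) A (A + t).
  apply: meas_family.
  - exact: ST_meas.
  - by move=> r; apply: measurable_itv.
  - by move=> r; apply: win_ST.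
  - move=> r r' rr'; apply/seteqP; split => z // [].
    rewrite /W /= !in_itv /= => /andP[_ h1] /andP[h2 _].
    have := sep (k + r%:Z) (k + r'%:Z) ltac:(lia).
    move=> h3; exfalso; lra.
apply: le_trans hfam.
have h1 : \sum_(r < (Mx.+1 * N)%N) mw r
          <= \sum_(r < (Mx.+1 * N)%N) mu (W r `&` `[A, A + t]).
  by apply: ler_sum => r _; apply: mu_win.
apply: le_trans h1.
rewrite -(big_mkord xpredT mw) regroup exchange_big_nat /=.
rewrite shift_sum.
apply: ler_sum_nat => j' /andP[_ hj'].
set j := (j' + i)%N.
have hj : (i <= j < i + N)%N by rewrite /j; apply/andP; split; lia.
have ex : t + p - L j%:Z - g - (o j%:Z - o i%:Z) = t + d j by rewrite /d; lra.
rewrite ex.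
have [d0 dp] := andP (hd j hj).
have L0 := HL j%:Z.
apply: (le_trans (class_bound p (L j%:Z) (d j) t (o j%:Z + q%:~R * p) A Mx Hp L0 d0 dp t0 _ _)).
- rewrite /A /d; lra.
- rewrite -hMx; apply: le_floor; rewrite ler_pM2r ?invr_gt0 //; lra.
- rewrite big_mkord; apply: ler_sum => m _.
  rewrite /mw.
  have ek : k + (m * N + j')%N%:Z = j%:Z + (q + m%:Z) * N%:Z by rewrite /k /j; lia.
  rewrite ek shift shiftL intrD mulrDl addrA.
  by [].
Qed.

Lemma beta_TDMA_ge0 (C x Lj : R) : 0 < C -> 0 <= x -> 0 <= Lj -> 0 <= beta_TDMA C p x Lj.
Proof.
move=> C0 x0 L0; rewrite /beta_TDMA; apply: mulr_ge0; first exact: ltW.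
rewrite le_max; apply/orP; left; apply: mulr_ge0 => //.
by rewrite ler0z floor_ge0; apply: divr_ge0 => //; apply: ltW.
Qed.

Lemma term_ge0 (C t : R) (i : nat) : 0 < C -> 0 <= t -> 0 <= beta_ST_term C p N o L t i.
Proof.
move=> C0 t0; rewrite /beta_ST_term big_nat_cond; apply: sumr_ge0 => j /andP[/andP[h1 h2] _].
apply: beta_TDMA_ge0 => //.
have := dbounds i j ltac:(apply/andP; split => //).
move=> /andP[h3 _].
have -> : t + p - L j%:Z - gap o L i%:Z - (o j%:Z - o i%:Z)
  = t + (p - L j%:Z - gap o L i%:Z - (o j%:Z - o i%:Z)) by lra.
by apply: addr_ge0.
Qed.

Lemma beta_ST_ge0 (C t : R) : 0 < C -> 0 <= t -> 0 <= beta_ST C p N o L t.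
Proof.
move=> C0 t0; rewrite /beta_ST; apply: le_bigmin; first exact: term_ge0.
by move=> i _; apply: term_ge0.
Qed.

Lemma st_lower (C s t : R) : 0 < C -> 0 <= t ->
  beta_ST C p N o L t / C <= meas (ST_set o L) s (s + t).
Proof.
move=> C0 t0.
have [k [hk1 hk2]] := exists_k s.
have N0 : N%:Z != 0 by rewrite eqz_nat -lt0n.
have e := divz_eq k N%:Z.
have r0 : 0 <= (k %% N%:Z)%Z by apply: modz_ge0.
have rN : (k %% N%:Z < N%:Z)%Z by apply: ltz_pmod; rewrite ltz_nat.
set r := (k %% N%:Z)%Z in e r0 rN.
set q := (k %/ N%:Z)%Z in e.
set i := `|r|%N.
have er : r = i%:Z by rewrite /i gez0_abs.
have iN : (i < N)%N by rewrite -ltz_nat -er.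
have ek1 : k - 1 = (i%:Z - 1) + q * N%:Z by rewrite e er; lia.
set a := o (k - 1) + L (k - 1).
have ea : a = o i%:Z - gap o L i%:Z + q%:~R * p.
  by rewrite /a ek1 shift shiftL /gap; lra.
have hcore := core i q t iN t0.
rewrite -ea in hcore.
have hb : beta_ST C p N o L t / C <= \sum_(i <= j < i + N)
    Num.max ((Num.floor ((t + p - L j%:Z - gap o L i%:Z - (o j%:Z - o i%:Z)) / p))%:~R * L j%:Z)
      ((t + p - L j%:Z - gap o L i%:Z - (o j%:Z - o i%:Z))
       - (Num.ceil ((t + p - L j%:Z - gap o L i%:Z - (o j%:Z - o i%:Z)) / p))%:~R * (p - L j%:Z)).
  rewrite ler_pdivrMr // mulrC mulr_sumr.
  have := bigmin_le (beta_ST_term C p N o L t 0)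
     (Ordinal iN) (fun i0 : 'I_N => beta_ST_term C p N o L t i0).
  by [].
apply: (le_trans hb); apply: (le_trans hcore).
clear hb hcore.
have hw : `[o (k - 1), a[ `<=` ST_set o L by apply: win_ST.
case: (lerP a s) => has.
  apply: meas_mono => //; first exact: ST_meas.
    lra.
  move=> z [[m _ hm] hz]; split; first by exists m.
  move: hz hm; rewrite /= !in_itv /= => /andP[hz1 hz2] /andP[hm1 hm2].
  case: (lerP s z) => hsz; first by rewrite /=; apply: (le_trans hz2); rewrite lerD2r.
  exfalso; case: (lerP m (k - 1)) => hmk.
    have := sepL _ _ hmk; rewrite -/a => h.
    by have := lt_le_trans hm2 (le_trans h hz1); rewrite ltxx.
  have hkm : k <= m by move: hmk; rewrite -lezD1 subrK.
  have := mono k m hkm => h.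
  by have := lt_trans (le_lt_trans (le_trans h hm1) hsz) hk2; rewrite ltxx.
have sub : forall u, u <= a -> `[s, u[ `<=` ST_set o L.
  move=> u ua z; rewrite /= in_itv /= => /andP[h1 h2]; apply: hw.
  by rewrite /= in_itv /=; apply/andP; split; lra.
case: (lerP (s + t) a) => hst.
  have := meas_split_ge (ST_set o L) s (s + t) (s + t) ST_meas ltac:(lra) (lexx _) (sub _ hst).
  have := meas_len (ST_set o L) a (a + t) ST_meas ltac:(lra).
  have := meas_ge0 (ST_set o L) (s + t) (s + t).
  lra.
have := meas_split_ge (ST_set o L) s a (s + t) ST_meas ltac:(lra) ltac:(lra) (sub _ (lexx _)).
have := meas_split_le (ST_set o L) a (s + t) (a + t) ST_meas ltac:(lra) ltac:(lra).
lra.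
Qed.
End S.

Theorem theorem5 (R : realType)
  (* port rate and GCL *)
  (C p : R) (N : nat) (o L : int -> R)
  (HC : 0 < C) (Hp : 0 < p) (HN : (1 <= N)%N)
  (Ho0 : 0 <= o 0)
  (Hoinc : forall k : nat, (k.+1 < N)%N -> o k%:Z < o k.+1%:Z)
  (HoN : o (N.-1)%:Z < p)
  (HL : forall k : int, 0 <= L k)
  (Hdisj : forall k : nat, (k.+1 < N)%N -> o k%:Z + L k%:Z <= o k.+1%:Z)
  (Hwrap : o (N.-1)%:Z + L (N.-1)%:Z <= o 0 + p)
  (Hoper : forall k : int, o (k + N%:Z) = o k + p)
  (HLper : forall k : int, L (k + N%:Z) = L k)
  (* AVB class M_i *)
  (idSl : R) (Hid : 0 < idSl < C)
  (Rstar c : R -> R) (cmin cmax : R)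
  (Hcmin : cmin <= cmax)
  (Hcb : forall t, cmin <= c t <= cmax)
  (Hpart : forall (s dt : R), 0 <= dt ->
     exists Tp Tm T0 : set R,
       [/\ measurable Tp /\ measurable Tm /\ measurable T0,
           Tp `|` Tm `|` T0 = `[s, s + dt]%classic,
           Tp `&` Tm = set0 /\ Tp `&` T0 = set0 /\ Tm `&` T0 = set0,
           ST_set o L `&` `[s, s + dt]%classic `<=` T0 &
           forall a b, s <= a -> a <= b -> b <= s + dt ->
             Rstar b - Rstar a = C * meas Tm a b /\
             c b - c a <= idSl * meas Tp a b + (idSl - C) * meas Tm a b]) :
  forall (s dt : R), 0 <= dt ->
    Rstar (s + dt) - Rstar s <=
      up_plus (fun t => t - beta_ST C p N o L t / C) dt * idSl + cmax - cmin.
Proof.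
move=> s dt dt0.
have STl : beta_ST C p N o L dt / C <= meas (ST_set o L) s (s + dt) by apply: st_lower.
have [Tp [Tm [T0 [[mTp [mTm mT0]] hU [d1 [d2 d3]] hST hab]]]] := Hpart s dt dt0.
have sdt : s <= s + dt by rewrite lerDl.
have [hR hc] := hab s (s + dt) (lexx s) sdt (lexx _).
have sTp : Tp `<=` `[s, s + dt] by rewrite -hU => z h; left; left.
have sTm : Tm `<=` `[s, s + dt] by rewrite -hU => z h; left; right.
have sT0 : T0 `<=` `[s, s + dt] by rewrite -hU => z h; right.
rewrite /meas -/(mu _) in hR hc.
rewrite (setIidl sTp) (setIidl sTm) in hc.
rewrite (setIidl sTm) in hR.
have e1 : mu (Tp `|` Tm) = mu Tp + mu Tm by apply: (muU _ _ s (s + dt)).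
have e2 : mu (Tp `|` Tm `|` T0) = mu (Tp `|` Tm) + mu T0.
  apply: (muU _ _ s (s + dt)) => //.
  - by apply: measurableU.
  - by rewrite setIUl d2 d3 setU0.
  - by move=> z [h|h]; [apply: sTp | apply: sTm].
have e3 : mu (Tp `|` Tm `|` T0) = dt by rewrite hU mu_cc // addrAC subrr add0r.
have hT0 : meas (ST_set o L) s (s + dt) <= mu T0.
  rewrite measE; apply: (mu_le _ _ s (s + dt)) => //.
  by apply: measurableI => //; apply: ST_meas.
have [c1 c2] := andP (Hcb s).
have [c3 c4] := andP (Hcb (s + dt)).
have [id0 idC] := andP Hid.
pose f := fun t => t - beta_ST C p N o L t / C.
have hub : has_ubound [set f u | u in `[0, dt]].
  exists dt => x [u hu <-].
  move: hu; rewrite /= in_itv /= => /andP[u0 udt].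
  have := beta_ST_ge0 p N o L Hp HN Ho0 HL Hdisj Hwrap Hoper HLper C u HC u0.
  move=> hb; rewrite /f.
  have : 0 <= beta_ST C p N o L u / C by apply: divr_ge0 => //; apply: ltW.
  lra.
have hsup : f dt <= sup [set f u | u in `[0, dt]].
  apply: ub_le_sup => //; exists dt => //.
  by rewrite /= in_itv /= lexx dt0.
have hUp : dt - beta_ST C p N o L dt / C <= up_plus f dt.
  by rewrite /up_plus le_max hsup orbT.
have k1 : idSl * (dt - mu T0) <= idSl * (dt - beta_ST C p N o L dt / C).
  by apply: ler_wpM2l; [apply: ltW | lra].
have k2 : idSl * (dt - beta_ST C p N o L dt / C) <= up_plus f dt * idSl.
  by rewrite mulrC; apply: ler_wpM2r => //; apply: ltW.
have k0 : idSl * (mu Tp + mu Tm + mu T0) = idSl * dt by rewrite -e3 e2 e1.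
rewrite hR.
have : idSl * (dt - mu T0) = idSl * dt - idSl * mu T0 by rewrite mulrBr.
have : idSl * (mu Tp + mu Tm + mu T0) = idSl * mu Tp + idSl * mu Tm + idSl * mu T0 by rewrite !mulrDr.
have : (idSl - C) * mu Tm = idSl * mu Tm - C * mu Tm by rewrite mulrBl.
rewrite /f in k2.
rewrite -/(mu Tp) in hc.
lra.
Qed.
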